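(* Let $T$ be a constant invertible complex $N\times N$ matrix with $T^\ast=T^\intercal=T^{-1}$. Let $C,K,L$ be constant complex $N\times N$ matrices with $K^\intercal=K$, and $V\in\mathbb{C}^N$, such that $C^\ast=TCT^{-1}$, $K^\ast=TKT^{-1}$, $L^\ast=TLT^{-1}$, $V^\ast=TV$. Write $\tilde\xi(\mathbf{t}_o,L)=\sum_{n\ge0}t_{2n+1}L^{2n+1}$ and $\tilde\xi'(\mathbf{t}_o,L)=\sum_{n\ge0}(2n+1)t_{2n+1}L^{2n}$ for real $\mathbf{t}_o=(t_1,t_3,t_5,\ldots)$. Then each of the following functions $\tau$ is real: (a) (case 1, CKP) if $L^\intercal K+KL=-VV^\intercal$ and $C^\intercal=C$: $\tau=\det\big(C-e^{\tilde\xi(\mathbf{t}_o,L^\intercal)}Ke^{\tilde\xi(\mathbf{t}_o,L)}\big)$; (b) (case 1, BKP) if $L^\intercal K+KL=-VV^\intercal$ and $C^\intercal=-C$: $\tau=\det\big(C-e^{\tilde\xi(\mathbf{t}_o,L^\intercal)}(L^\intercal K-KL)e^{\tilde\xi(\mathbf{t}_o,L)}\big)$; (c) (case 2, CKP) if $L^\intercal=-L$, $I_N+[L,K]=VV^\intercal$ and $C^\intercal=C$: $\tau=\det\big(e^{\tilde\xi(\mathbf{t}_o,L)}Ce^{-\tilde\xi(\mathbf{t}_o,L)}+\tilde\xi'(\mathbf{t}_o,L)-K\big)$; (d) (case 2, BKP) if $L^\intercal=-L$, $I_N+[L,K]=VV^\intercal$ and $C^\intercal=-C$: $\tau=\det\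big(e^{\tilde\xi(\mathbf{t}_o,L)}Ce^{-\tilde\xi(\mathbf{t}_o,L)}-(KL+LK)+2L\,\tilde\xi'(\mathbf{t}_o,L)\big)$.
   Context: $X^\ast$ denotes the entrywise complex conjugate of $X$ and $X^\intercal$ its transpose; $[L,K]=LK-KL$. These $\tau$-functions determine, via $\phi=(\ln\tau)_{t_1}$, solutions of the BKP and CKP hierarchies constructed from a matrix Riccati hierarchy. *)

(* Defs.v *)
From HB Require Import structures.
From mathcomp Require Import all_boot all_order all_algebra.
From mathcomp Require Import complex.
From mathcomp Require Import all_classical all_reals all_analysis.
Set Implicit Arguments. Unset Strict Implicit. Unset Printing Implicit Defensive.
Import Order.TTheory GRing.Theory Num.Theory ComplexField.
Local Open Scope classical_set_scope.
Local Open Scope ring_scope.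

Definition mxconj (F : numClosedFieldType) (m n : nat) (X : 'M[F]_(m, n)) : 'M[F]_(m, n) :=
  map_mx Num.conj X.

Definition expm (R : realType) (N : nat) (A : 'M[R[i]]_N) : 'M[R[i]]_N :=
  lim (series (fun k : nat => (k`!%:R)^-1 *: A ^+ k) @ \oo).

(* Odd times t_o = (t_1, t_3, t_5, ...) given (finitely supported) as a
   sequence t with t`_n = t_{2n+1}. *)
Definition xit (R : realType) (N : nat) (t : seq R) (L : 'M[R[i]]_N) : 'M[R[i]]_N :=
  \sum_(n < size t) ((t`_n)%:C)%C *: L ^+ (2 * n + 1)%N.

Definition xit' (R : realType) (N : nat) (t : seq R) (L : 'M[R[i]]_N) : 'M[R[i]]_N :=
  \sum_(n < size t) ((2 * n + 1)%N%:R * ((t`_n)%:C)%C) *: L ^+ (2 * n)%N.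

(* Main.v *)
Require Import Defs.
From HB Require Import structures.
From mathcomp Require Import all_boot all_order all_algebra.
From mathcomp Require Import complex.
From mathcomp Require Import all_classical all_reals all_analysis.
From mathcomp Require Import ring.
Import Order.TTheory GRing.Theory Num.Theory ComplexField.
Local Open Scope ring_scope.

Section Helpers.
Local Open Scope classical_set_scope.
Variable R : realType.
Local Notation C := R[i].
Local Notation MT n := (matrix_matrix__canonical__normed_module_NormedModule R[i] n n).

Lemma mxentry_le (m n : nat) (x : 'M[C]_(m,n)) i j : `|x i j| <= `|x|.
Proof.
rewrite [`|x|]/Num.norm /=.
rewrite -num_abs_le; last by [].
apply/bigmax_geP; right => /=; exists (i, j) => //.
by rewrite -num_le /= normr_id.
Qed.

Lemma mxnorm_le (m n : nat) (x : 'M[C]_(m,n)) (c : C) :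
  0 <= c -> (forall i j, `|x i j| <= c) -> `|x| <= c.
Proof.
move=> c0 H.
rewrite [`|x|]/Num.norm /= mx_normE.
have -> : c = (NngNum c0)%:num by [].
rewrite num_le; apply/bigmax_leP; split => // ij _.
by rewrite -num_le /=.
Qed.

Lemma mulmx_norm_le (m n p : nat) (A : 'M[C]_(m,n)) (B : 'M[C]_(n,p)) :
  `|A *m B| <= n%:R * (`|A| * `|B|).
Proof.
apply: mxnorm_le; first by rewrite mulr_ge0 // mulr_ge0.
move=> i j; rewrite mxE.
apply: le_trans (ler_norm_sum _ _ _) _.
apply: le_trans (ler_sum _ (G := fun _ => `|A| * `|B|) _) _.
  move=> k _; rewrite normrM.
  by apply: ler_pM => //; apply: mxentry_le.
by rewrite sumr_const card_ord mulr_natl.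
Qed.

Lemma mxconj_norm (m n : nat) (x : 'M[C]_(m,n)) : `|mxconj x| = `|x|.
Proof.
rewrite /Num.norm /= !mx_normE; congr (_%:num).
by apply: eq_bigr => ij _; apply: val_inj => /=; rewrite mxE norm_conjC.
Qed.

Lemma lip_cont (V : normedModType C) (f : V -> V) (c : C) :
  0 < c -> (forall x y, `|f x - f y| <= c * `|x - y|) -> continuous f.
Proof.
move=> c0 H x; apply/cvgrPdist_lt => e e0; near=> z.
rewrite (le_lt_trans (H _ _))// mulrC -ltr_pdivlMr//.
by near: z; apply: cvgr_dist_lt => //; rewrite divr_gt0.
Unshelve. all: by end_near. Qed.


Lemma lim_comm (n : nat) (f : MT n -> MT n) (s : nat -> MT n) :
  continuous f -> (forall x, f (f x) = x) -> f 0 = 0 ->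
  lim ((f \o s) @ \oo) = f (lim (s @ \oo)).
Proof.
move=> fc finv f0.
have key : forall u : nat -> MT n, cvgn u -> (f \o u) @ \oo --> f (limn u).
  move=> u hu.
  have hu' : u @ \oo --> limn u := hu.
  exact: (cvg_comp _ _ hu' (fc (limn u))).
case: (pselect (cvgn s)) => hs.
  exact: (cvg_lim _ (key s hs)).
have hfs : ~ cvgn (f \o s).
  move=> hfs; apply: hs.
  have h2 := key _ hfs.
  have e : f \o (f \o s) = s by apply/funext => k /=; rewrite finv.
  rewrite e in h2.
  exact: (cvgP _ h2).
have e1 := dvg_inP _ hs.
have e2 := dvg_inP _ hfs.
rewrite /= in e1 e2.
have p0 : (point : MT n) = 0.
  rewrite /point /=. apply/matrixP => a b; rewrite !mxE /point /=. by [].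
rewrite p0 in e1 e2.
have e1' : limn s = 0 := e1.
have e2' : limn (f \o s) = 0 := e2.
by rewrite e1' e2' f0.
Qed.

Lemma mxconjM (m p q : nat) (A : 'M[C]_(m,p)) (B : 'M[C]_(p,q)) :
  mxconj (A *m B) = mxconj A *m mxconj B.
Proof. by rewrite /mxconj map_mxM. Qed.
Lemma mxconjD (m p : nat) (A B : 'M[C]_(m,p)) : mxconj (A + B) = mxconj A + mxconj B.
Proof. by rewrite /mxconj map_mxD. Qed.
Lemma mxconjN (m p : nat) (A : 'M[C]_(m,p)) : mxconj (- A) = - mxconj A.
Proof. by rewrite /mxconj map_mxN. Qed.
Lemma mxconj0 (m p : nat) : mxconj (0 : 'M[C]_(m,p)) = 0.
Proof. by rewrite /mxconj map_mx0. Qed.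
Lemma mxconj1 (m : nat) : mxconj (1%:M : 'M[C]_m) = 1%:M.
Proof. by rewrite /mxconj map_mx1. Qed.
Lemma mxconjZ (m p : nat) (a : C) (A : 'M[C]_(m,p)) : mxconj (a *: A) = a^* *: mxconj A.
Proof. by apply/matrixP => i j; rewrite !mxE rmorphM. Qed.
Lemma mxconjT (m p : nat) (A : 'M[C]_(m,p)) : mxconj (A^T) = (mxconj A)^T.
Proof. by apply/matrixP => i j; rewrite !mxE. Qed.
Lemma mxconjK (m p : nat) (A : 'M[C]_(m,p)) : mxconj (mxconj A) = A.
Proof. by apply/matrixP => i j; rewrite !mxE conjCK. Qed.
Lemma mxconjV (m : nat) (A : 'M[C]_m) : mxconj (invmx A) = invmx (mxconj A).
Proof. by rewrite /mxconj map_invmx. Qed.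
Lemma mxconj_det (m : nat) (A : 'M[C]_m) : \det (mxconj A) = (\det A)^*.
Proof. by rewrite /mxconj det_map_mx. Qed.
Lemma conj_realC (r : R) : ((r%:C)%C)^* = (r%:C)%C.
Proof. by apply/CrealP; apply/complex_realP; exists r. Qed.

End Helpers.

Section Good.
Variables (R : realType) (n : nat) (T : 'M[R[i]]_n).
Hypothesis hT : T \in unitmx.
Hypothesis hT1 : mxconj T = T^T.
Hypothesis hT2 : T^T = invmx T.

Definition good (M : 'M[R[i]]_n) := mxconj M = T *m M *m invmx T.

Lemma good_add M N : good M -> good N -> good (M + N).
Proof. by rewrite /good => hM hN; rewrite mxconjD hM hN mulmxDr mulmxDl. Qed.
Lemma good_opp M : good M -> good (- M).
Proof. by rewrite /good => hM; rewrite mxconjN hM mulmxN mulNmx. Qed.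
Lemma good_0 : good 0.
Proof. by rewrite /good mxconj0 mulmx0 mul0mx. Qed.
Lemma good_1 : good 1%:M.
Proof. by rewrite /good mxconj1 mulmx1 mulmxV. Qed.
Lemma good_mul M N : good M -> good N -> good (M *m N).
Proof.
by rewrite /good => hM hN; rewrite mxconjM hM hN !mulmxA (mulmxKV hT).
Qed.
Lemma good_scale (a : R[i]) M : a^* = a -> good M -> good (a *: M).
Proof. by rewrite /good => ha hM; rewrite mxconjZ ha hM -scalemxAr -scalemxAl. Qed.
Lemma good_exp M k : good M -> good (M ^+ k).
Proof.
move=> hM; elim: k => [|k IH]; first by rewrite expr0; exact: good_1.
by rewrite exprS -mulmxE; apply: good_mul.
Qed.
Lemma good_sum (I : Type) (r : seq I) (P : pred I) (F : I -> 'M[R[i]]_n) :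
  (forall i, P i -> good (F i)) -> good (\sum_(i <- r | P i) F i).
Proof.
move=> hF; apply: (big_ind good) => //; [exact: good_0 | exact: good_add].
Qed.
Lemma good_tr M : good M -> good M^T.
Proof.
rewrite /good => hM; rewrite mxconjT hM !trmx_mul trmx_inv hT2 invmxK.
by rewrite mulmxA.
Qed.

Definition phi (X : 'M[R[i]]_n) : 'M[R[i]]_n := invmx T *m mxconj X *m T.

Lemma good_phi X : good X -> phi X = X.
Proof.
by rewrite /good /phi => hX; rewrite hX !mulmxA mulVmx // mul1mx mulmxKV.
Qed.
Lemma phi_good X : phi X = X -> good X.
Proof.
rewrite /good /phi => hX; rewrite -{2}hX !mulmxA mulmxV // mul1mx mulmxK //.
Qed.
Lemma phiK X : phi (phi X) = X.
Proof.
rewrite /phi !mxconjM mxconjK mxconjV hT1 hT2 invmxK.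
rewrite !mulmxA mulVmx // mul1mx mulmxKV //.
Qed.
Lemma phi0 : phi 0 = 0.
Proof. by rewrite /phi mxconj0 mulmx0 mul0mx. Qed.
Lemma phiD X Y : phi (X + Y) = phi X + phi Y.
Proof. by rewrite /phi mxconjD mulmxDr mulmxDl. Qed.
Lemma phiN X : phi (- X) = - phi X.
Proof. by rewrite /phi mxconjN mulmxN mulNmx. Qed.
Lemma phiM X Y : phi (X *m Y) = phi X *m phi Y.
Proof. by rewrite /phi mxconjM !mulmxA mulmxK. Qed.
Lemma phi1 : phi 1%:M = 1%:M.
Proof. by rewrite /phi mxconj1 mulmx1 mulVmx. Qed.
Lemma phiZ (a : R[i]) X : a^* = a -> phi (a *: X) = a *: phi X.
Proof. by rewrite /phi => ha; rewrite mxconjZ ha -scalemxAr -scalemxAl. Qed.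
Lemma phi_exp X k : phi (X ^+ k) = phi X ^+ k.
Proof.
elim: k => [|k IH]; first by rewrite !expr0; exact: phi1.
by rewrite !exprS -!mulmxE phiM IH.
Qed.
Lemma phi_sum (I : Type) (r : seq I) (P : pred I) (F : I -> 'M[R[i]]_n) :
  phi (\sum_(i <- r | P i) F i) = \sum_(i <- r | P i) phi (F i).
Proof.
by elim/big_rec2: _ => [|i x y _ <-]; [exact: phi0 | exact: phiD].
Qed.

Local Notation MT := (matrix_matrix__canonical__normed_module_NormedModule R[i] n n).

Lemma phi_cont : continuous (phi : MT -> MT).
Proof.
apply: (@lip_cont R MT phi (n%:R * (n%:R * (`|invmx T| * `|T|)) + 1)).
  by apply: ltr_wpDl; [rewrite !mulr_ge0 | exact: ltr01].
move=> X Y.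
have e : phi X - phi Y = phi (X - Y) by rewrite phiD phiN.
rewrite e /phi.
have h1 := @mulmx_norm_le R _ _ _ (invmx T *m mxconj (X - Y)) T.
have h2 := @mulmx_norm_le R _ _ _ (invmx T) (mxconj (X - Y)).
rewrite mxconj_norm in h2.
apply: (le_trans h1).
apply: (@le_trans _ _ (n%:R * (n%:R * (`|invmx T| * `|X - Y|) * `|T|))).
  by apply: ler_wpM2l => //; apply: ler_wpM2r.
have -> : n%:R * (n%:R * (`|invmx T| * `|X - Y|) * `|T|) =
  n%:R * (n%:R * (`|invmx T| * `|T|)) * `|X - Y| by ring.
by apply: ler_wpM2r => //; rewrite lerDl.
Qed.

Lemma good_expm A : good A -> good (expm A).
Proof.
move=> hA; apply: phi_good.
have hA' := @good_phi A hA.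
pose u := fun k : nat => (k`!%:R : R[i])^-1 *: A ^+ k.
have hs : (phi \o series u) = series u.
  apply/funext => k; rewrite /series /= phi_sum; apply: eq_bigr => j _.
  by rewrite /u phiZ ?phi_exp ?hA' // fmorphV rmorph_nat.
have := @lim_comm R n phi (series u) phi_cont phiK phi0.
rewrite hs => e.
rewrite /expm.
exact: (esym e).
Qed.

Lemma good_det M : good M -> \det M \is Num.real.
Proof.
move=> hM; apply/CrealP.
rewrite -mxconj_det hM !det_mulmx det_inv mulrC mulrA mulVr ?mul1r // -unitmxE.
Qed.

Lemma good_xit M t : good M -> good (xit t M).
Proof.
move=> hM; rewrite /xit; apply: good_sum => j _.
by apply: good_scale; [exact: conj_realC | exact: good_exp].
Qed.

Lemma good_xit' M t : good M -> good (xit' t M).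
Proof.
move=> hM; rewrite /xit'; apply: good_sum => j _.
apply: good_scale; last exact: good_exp.
rewrite rmorphM rmorph_nat; congr (_ * _); exact: conj_realC.
Qed.

End Good.

Theorem propositionC4 (R : realType) (N : nat)
    (T C K L : 'M[R[i]]_N) (V : 'cV[R[i]]_N) :
  T \in unitmx ->
  mxconj T = (T^T) -> (T^T) = invmx T ->
  (K^T) = K ->
  mxconj C = T *m C *m invmx T ->
  mxconj K = T *m K *m invmx T ->
  mxconj L = T *m L *m invmx T ->
  mxconj V = T *m V ->
  (* (a) case 1, CKP *)
  ((L^T) *m K + K *m L = - (V *m V^T) -> (C^T) = C ->
     forall t : seq R,
       \det (C - expm (xit t (L^T)) *m K *m expm (xit t L)) \is Num.real) /\
  (* (b) case 1, BKP *)
  ((L^T) *m K + K *m L = - (V *m V^T) -> (C^T) = - C ->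
     forall t : seq R,
       \det (C - expm (xit t (L^T)) *m ((L^T) *m K - K *m L) *m expm (xit t L))
         \is Num.real) /\
  (* (c) case 2, CKP *)
  ((L^T) = - L -> 1%:M + (L *m K - K *m L) = V *m V^T -> (C^T) = C ->
     forall t : seq R,
       \det (expm (xit t L) *m C *m expm (- xit t L) + xit' t L - K)
         \is Num.real) /\
  (* (d) case 2, BKP *)
  ((L^T) = - L -> 1%:M + (L *m K - K *m L) = V *m V^T -> (C^T) = - C ->
     forall t : seq R,
       \det (expm (xit t L) *m C *m expm (- xit t L) - (K *m L + L *m K)
             + 2%:R *: (L *m xit' t L))
         \is Num.real).
Proof.
move=> hT hT1 hT2 _ hC hK hL _.
have Gdet := @good_det R N T hT.
have Gadd := @good_add R N T.
have Gopp := @good_opp R N T.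
have Gmul := @good_mul R N T hT.
have Gsc := @good_scale R N T.
have Gtr := @good_tr R N T hT2.
have Gexp := @good_expm R N T hT hT1 hT2.
have Gx := @good_xit R N T hT.
have Gx' := @good_xit' R N T hT.
have gC : @good R N T C := hC.
have gK : @good R N T K := hK.
have gL : @good R N T L := hL.
have gLt : @good R N T L^T by apply: (Gtr).
have gE : forall M t, @good R N T M -> @good R N T (expm (xit t M)).
  by move=> M t hM; apply: (Gexp) => //; apply: (Gx).
have gEm : forall M t, @good R N T M -> @good R N T (expm (- xit t M)).
  by move=> M t hM; apply: (Gexp) => //; apply: (Gopp); apply: (Gx).
split; [|split; [|split]].
- move=> _ _ t; apply: (Gdet) => //.
  apply: (Gadd) => //; apply: (Gopp).
  apply: (Gmul) => //; [apply: (Gmul) => //|]; by apply: (gE).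
- move=> _ _ t; apply: (Gdet) => //.
  apply: (Gadd) => //; apply: (Gopp).
  apply: (Gmul) => //; [apply: (Gmul) => //|]; try by apply: (gE).
  apply: (Gadd); [apply: (Gmul) => // | apply: (Gopp); apply: (Gmul) => //].
- move=> _ _ _ t; apply: (Gdet) => //.
  apply: (Gadd); last by apply: (Gopp).
  apply: (Gadd); last by apply: (Gx').
  apply: (Gmul) => //; [apply: (Gmul) => //|]; [exact: (gE) | exact: (gEm)].
- move=> _ _ _ t; apply: (Gdet) => //.
  apply: (Gadd); last first.
    apply: (Gsc); first by rewrite rmorph_nat.
    by apply: (Gmul) => //; apply: (Gx').
  apply: (Gadd); last first.
    by apply: (Gopp); apply: (Gadd); apply: (Gmul).
  apply: (Gmul) => //; [apply: (Gmul) => //|]; [exact: (gE) | exact: (gEm)].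
Qed.
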